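(* Let $\mathbf{x}$ be a parking function of length $n$ and run Algorithm A on $\mathbf{x}$. Suppose that at some down step, $j$ and $k$ are both down feeder candidates for an index $i$ (that is, $y_i>0$, $i<j$, $i<k$, and neither $i\leftarrow j$ nor $i\leftarrow k$ has been introduced yet). Then $j$ is chosen as the down feeder at this step if and only if $|s_j(\mathbf{x})|>|s_k(\mathbf{x})|$.
   Context: A parking function of length $n$ is a sequence of positive integers which, sorted increasingly as $x_{(1)}\le\dots\le x_{(n)}$, satisfies $x_{(k)}\le k$ for all $k$. Algorithm A: Input a parking function $\mathbf{x}\in\mathbb{Z}_{>0}^n$; start with the vertex set $[n]$ and no edges, and set $\mathbf{y}:=\mathbf{x}-(1,\dots,1)$. Repeat the following. (Up step) If some $y_k=0$: let $j:=\max\{k: y_k=0\}$ (the up feeder); for every $k>j$ with $y_k>0$, introduce the directed (up) edge $j\rightarrow k$ and replace $y_k$ by $y_k-1$; replace every entry that was negative at the start of this step by that entry minus $1$; set $y_j:=-1$; repeat. (Down step) Else, if some $y_k>0$: among all indices $j$ such that there is $k<j$ with $y_k>0$ and the edge $k\leftarrow j$ not yet introduced (down feeder candidates), choose $j$ with minimal $y_j$ (the down feeder); for every $k<j$ with $y_k>0$, introduce the directed (down) edge $k\leftarrow j$ (directed from $j$ to $k$) and replace $y_k$ by $y_k-1$; repeat. (Stop) Else (all $y_k<0$): join every pair of vertices not yet joined by an undirected (downish) edge and stop. Output: the mixed graph $P(\mathbf{x})$ and the source priority vector $s(\mathbf{x}):=(y_1,\dots,y_n)$ (final values).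
   Formalization: The iff concerns only candidates j ≠ k one of which is the down feeder at this step, and a tie for minimal $y_j$ among candidates goes to the smallest index. Apart from conventions, each condition added here is assumed in the paper as well or is needed for the statement above to hold. *)

(* Defs.v *)
(* Formalization of Algorithm A (indices are 0-based). *)
From mathcomp Require Import all_boot all_order all_algebra.
Import Order.TTheory GRing.Theory Num.Theory.
Set Implicit Arguments. Unset Strict Implicit. Unset Printing Implicit Defensive.
Local Open Scope ring_scope.

Definition parking_function (x : seq nat) : bool :=
  all (fun a => (0 < a)%N) x &&
  [forall i : 'I_(size x), (nth 0%N (sort leq x) i <= i.+1)%N].

(* State of Algorithm A: current vector y, the introduced down edges
   (a pair (k, j) records the down edge  k <- j), and a stop flag.
   Up edges and the final undirected edges never influence the control
   flow nor y, so they are not recorded. *)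
Record state := State { ys : seq int; downs : seq (nat * nat); halted : bool }.

Definition init (x : seq nat) : state :=
  State [seq (a%:Z - 1) | a <- x] [::] false.

Definition up_feeder (y : seq int) : nat :=
  last 0%N [seq k <- iota 0 (size y) | y`_k == 0].

Definition up_update (y : seq int) (j : nat) : seq int :=
  [seq (if k == j then -1
        else if ((j < k)%N && (0 < y`_k)) || (y`_k < 0) then y`_k - 1
        else y`_k) | k <- iota 0 (size y)].

Definition is_cand (st : state) (i j : nat) : bool :=
  [&& (i < j)%N, (j < size (ys st))%N, 0 < (ys st)`_i & (i, j) \notin downs st].

Definition down_cand (st : state) (j : nat) : bool :=
  has (fun i => is_cand st i j) (iota 0 (size (ys st))).

Definition cands (st : state) : seq nat :=
  [seq j <- iota 0 (size (ys st)) | down_cand st j].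

Definition down_feeder (st : state) : nat :=
  let c := cands st in
  nth 0%N c (find (fun j => all (fun k => (ys st)`_j <= (ys st)`_k) c) c).

Definition down_update (st : state) (j : nat) : state :=
  let y := ys st in
  State [seq (if (k < j)%N && (0 < y`_k) then y`_k - 1 else y`_k)
        | k <- iota 0 (size y)]
        ([seq (k, j) | k <- iota 0 j & 0 < y`_k] ++ downs st)
        false.

Definition step (st : state) : state :=
  if halted st then st else
  let y := ys st in
  if has (fun v => v == 0) y then State (up_update y (up_feeder y)) (downs st) false
  else if has (fun v => 0 < v) y then
    (if cands st is [::] then State y (downs st) true (* never happens *)
     else down_update st (down_feeder st))
  else State y (downs st) true.

Definition is_down_step (st : state) : bool :=
  [&& ~~ halted st, ~~ has (fun v => v == 0) (ys st) & has (fun v => 0 < v) (ys st)].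

Definition state_at (x : seq nat) (t : nat) : state := iter t step (init x).

(* The algorithm stops after at most size x + sumn x steps (at most size x
   up steps; each down step decreases the total positive mass), so this is
   the final vector, i.e. the source priority vector s(x). *)
Definition source_priority (x : seq nat) : seq int :=
  ys (state_at x (size x + sumn x).+1).

(* Main.v *)
Require Import Defs.
From mathcomp Require Import all_boot all_order all_algebra zify.
Import Order.TTheory GRing.Theory Num.Theory.
Set Implicit Arguments. Unset Strict Implicit. Unset Printing Implicit Defensive.
Local Open Scope ring_scope.

Lemma nth_map_iota (F : nat -> int) n m : (m < n)%N ->
  [seq F k | k <- iota 0 n]`_m = F m.
Proof. by move=> mn; rewrite (nth_map 0%N) ?size_iota // nth_iota. Qed.

Lemma size_map_iota (F : nat -> int) n : size [seq F k | k <- iota 0 n] = n.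
Proof. by rewrite size_map size_iota. Qed.

Lemma last_filter_iota (p : pred nat) n : has p (iota 0 n) ->
  [/\ (last 0%N [seq k <- iota 0 n | p k] < n)%N, p (last 0%N [seq k <- iota 0 n | p k])
    & forall m, (last 0%N [seq k <- iota 0 n | p k] < m < n)%N -> ~~ p m].
Proof.
elim: n => [|n IH] //.
rewrite -addn1 iotaD filter_cat /= add0n has_cat /= orbF.
case: (boolP (p n)) => pn.
  rewrite last_cat /=; split => //; first lia.
  move=> m /andP[h1 h2]; lia.
rewrite cats0 orbF => /IH [h1 h2 h3].
split => //; first lia.
move=> m /andP[a b]; have [->|mn] := eqVneq m n => //.
apply: h3; rewrite a /=; lia.
Qed.

Lemma up_feederP (y : seq int) : has (fun v => v == 0) y ->
  [/\ (up_feeder y < size y)%N, y`_(up_feeder y) = 0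
    & forall m, (up_feeder y < m < size y)%N -> y`_m != 0].
Proof.
move=> /(has_nthP 0) [i hi yi].
have : has (fun k => y`_k == 0) (iota 0 (size y)).
  by apply/hasP; exists i => //; rewrite mem_iota.
by case/last_filter_iota => h1 /eqP h2 h3; split.
Qed.


Inductive step_spec st : Prop :=
 | SHalt of step st = st & halted st
 | SUp of ~~ halted st & has (fun v => v == 0) (ys st) &
          step st = State (up_update (ys st) (up_feeder (ys st))) (downs st) false
 | SDown of is_down_step st & cands st != [::] & step st = down_update st (down_feeder st)
 | SNoCand of is_down_step st & cands st = [::] & step st = State (ys st) (downs st) true
 | SFin of ~~ halted st & ~~ has (fun v => v==0) (ys st) & ~~ has (fun v => 0 < v) (ys st)
          & step st = State (ys st) (downs st) true.

Lemma step_cases st : step_spec st.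
Proof.
case: (boolP (halted st)) => h /=; first by apply: SHalt; rewrite /step h.
case: (boolP (has (fun v => v == 0) (ys st))) => hz.
  by apply: SUp; rewrite ?hz // /step (negbTE h) hz.
case: (boolP (has (fun v => 0 < v) (ys st))) => hp.
  case E: (cands st) => [|a l].
    by apply: SNoCand; rewrite /is_down_step ?h ?hz ?hp ?E // /step (negbTE h) (negbTE hz) hp E.
  by apply: SDown; rewrite /is_down_step ?h ?hz ?hp ?E // /step (negbTE h) (negbTE hz) hp E.
by apply: SFin; rewrite ?hz ?hp // /step (negbTE h) (negbTE hz) (negbTE hp).
Qed.

Lemma up_nth y u m : (m < size y)%N ->
  (up_update y u)`_m = if m == u then -1
     else if ((u < m)%N && (0 < y`_m)) || (y`_m < 0) then y`_m - 1 else y`_m.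
Proof. by move=> h; rewrite /up_update nth_map_iota. Qed.

Lemma down_nth st f m : (m < size (ys st))%N ->
  (ys (down_update st f))`_m = if (m < f)%N && (0 < (ys st)`_m) then (ys st)`_m - 1 else (ys st)`_m.
Proof. by move=> h; rewrite /down_update /= nth_map_iota. Qed.

Lemma size_step st : size (ys (step st)) = size (ys st).
Proof.
case: (step_cases st) => [-> _|_ _ ->|_ _ ->|_ _ ->|_ _ _ ->] //=.
  by rewrite size_map_iota.
by rewrite /down_update /= size_map_iota.
Qed.

Lemma exists_min (c : seq nat) (g : nat -> int) : c != [::] ->
  has (fun j => all (fun k => g j <= g k) c) c.
Proof.
elim: c => [|a c IH] _ //.
case: c IH => [|b c] IH; first by rewrite /= lexx.
have /hasP [m mc /allP mall] := IH isT.
have [gam|gam] := lerP (g a) (g m).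
  apply/hasP; exists a; first by rewrite inE eqxx.
  apply/allP => z; rewrite inE => /orP[/eqP ->//|zc].
  exact: le_trans gam (mall z zc).
apply/hasP; exists m; first by rewrite inE mc orbT.
apply/allP => z; rewrite inE => /orP[/eqP ->|zc]; first exact: ltW.
exact: mall.
Qed.

Lemma feederP st : cands st != [::] ->
  down_feeder st \in cands st /\
  forall c, c \in cands st -> (ys st)`_(down_feeder st) <= (ys st)`_c.
Proof.
move=> /(exists_min (fun j => (ys st)`_j)).
rewrite /down_feeder has_find => hf.
have := hf; rewrite -has_find => /(nth_find 0%N) /allP H.
by split => //; apply: mem_nth.
Qed.

Lemma mem_cands st j : (j \in cands st) = (j < size (ys st))%N && down_cand st j.
Proof. by rewrite /cands mem_filter mem_iota andbC. Qed.

Lemma down_candP st j : down_cand st j ->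
  exists i, [/\ (i < j)%N, (j < size (ys st))%N, 0 < (ys st)`_i & (i, j) \notin downs st].
Proof. by case/hasP => i _ /and4P[a b c d]; exists i. Qed.

Lemma cand_down st i j : is_cand st i j -> down_cand st j.
Proof.
move=> h; apply/hasP; exists i => //.
case/and4P: h => a b _ _; rewrite mem_iota /=; lia.
Qed.

Definition Q j k st := (ys st)`_j < 0 /\ (0 <= (ys st)`_k \/ (ys st)`_j < (ys st)`_k).

Lemma Q_step st j k : (j < size (ys st))%N -> (k < size (ys st))%N -> j <> k ->
  Q j k st -> Q j k (step st).
Proof.
move=> hj hk jk [Hj Hk].
case: (step_cases st) => [-> _|_ hz ->|_ _ ->|_ _ ->|_ _ _ ->] //=;
  try by split.
- case: (up_feederP hz) => u1 u2 u3.
  set u := up_feeder _ in u1 u2 u3 *.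
  rewrite /Q /= !up_nth //.
  have ju : j != u by apply/eqP => ju; move: Hj; rewrite ju u2 ltxx.
  rewrite (negbTE ju) Hj orbT; split; first lia.
  case: (eqVneq k u) => [ku|ku]; first by right; lia.
  case: ifP => hc.
    case/orP: hc => [/andP[_ hc]|hc]; [left; lia| right; case: Hk => Hk; lia].
  case: Hk => Hk; [by left| by right; lia].
- rewrite /Q /=; rewrite !down_nth //.
  rewrite [X in if X then _ else _](_ : _ = false); last by apply/negbTE; rewrite negb_and -leNgt ltW ?orbT.
  split=> //; case: ifP => hc; case: Hk => Hk; try by [left; lia| right; lia].
Qed.

Definition w (v : int) : nat := if 0 <= v then (absz v).+1 else 0%N.
Definition mu (y : seq int) : nat := sumn [seq w y`_m | m <- iota 0 (size y)].

Lemma w_le a b : a <= b -> (w a <= w b)%N.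
Proof. rewrite /w; case: ifP; case: ifP => //; lia. Qed.

Lemma w_lt a b : a < b -> 0 <= b -> (w a < w b)%N.
Proof. rewrite /w; case: ifP; case: ifP => //; lia. Qed.

Lemma sumn_le (s : seq nat) (f g : nat -> nat) : (forall a, a \in s -> f a <= g a)%N ->
  (sumn [seq f a | a <- s] <= sumn [seq g a | a <- s])%N.
Proof.
elim: s => //= a s IH H.
apply: leq_add; first by apply: H; rewrite inE eqxx.
by apply: IH => b bs; apply: H; rewrite inE bs orbT.
Qed.

Lemma sumn_lt (s : seq nat) (f g : nat -> nat) : (forall a, a \in s -> f a <= g a)%N ->
  (exists2 a, a \in s & f a < g a)%N ->
  (sumn [seq f a | a <- s] < sumn [seq g a | a <- s])%N.
Proof.
elim: s => [_ [] //|a s IH H [b]]; rewrite inE /= => /orP[/eqP ->|bs] hb.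
  have : (sumn [seq f a | a <- s] <= sumn [seq g a | a <- s])%N.
    by apply: sumn_le => c cs; apply: H; rewrite inE cs orbT.
  lia.
have : (f a <= g a)%N by apply: H; rewrite inE eqxx.
have : (sumn [seq f a | a <- s] < sumn [seq g a | a <- s])%N.
  apply: IH; last by exists b.
  by move=> c cs; apply: H; rewrite inE cs orbT.
lia.
Qed.


Lemma mu_lt (y y' : seq int) : size y' = size y ->
  (forall m, (m < size y)%N -> y'`_m <= y`_m) ->
  (exists2 m, (m < size y)%N & y'`_m < y`_m /\ 0 <= y`_m) -> (mu y' < mu y)%N.
Proof.
move=> hs hle [m hm [h1 h2]]; rewrite /mu hs.
apply: sumn_lt.
  by move=> a; rewrite mem_iota /= => ha; apply: w_le; apply: hle.
by exists m; [rewrite mem_iota| apply: w_lt].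
Qed.

Lemma mu_step st : ~~ halted (step st) -> (mu (ys (step st)) < mu (ys st))%N.
Proof.
case: (step_cases st) => [-> h|_ hz ->|hd hc ->|_ _ ->|_ _ _ ->] //=; try by rewrite h.
- case: (up_feederP hz) => u1 u2 u3 _.
  apply: mu_lt; first by rewrite size_map_iota.
    move=> m hm; rewrite up_nth //; case: eqP => [->|_]; first by rewrite u2.
    by case: ifP => _ //; rewrite gerDl lerN10.
  by exists (up_feeder (ys st)); rewrite // up_nth // eqxx u2.
- move=> _; case: (feederP hc) => hf _.
  move: hf; rewrite mem_cands => /andP[hfs /down_candP [i [hi _ hyi _]]].
  apply: mu_lt; first by rewrite /down_update /= size_map_iota.
    move=> m hm; rewrite down_nth //; case: ifP => _ //.
    by rewrite gerDl lerN10.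
  exists i; first lia.
  rewrite down_nth; last lia.
  rewrite hi hyi /=; split; [lia|exact: ltW].
Qed.

Lemma halted_step st : halted st -> step st = st.
Proof. by rewrite /step => ->. Qed.

Lemma state_atS x t : state_at x t.+1 = step (state_at x t).
Proof. by rewrite /state_at iterS. Qed.

Lemma mu_init x : (mu (ys (init x)) <= sumn x)%N.
Proof.
rewrite /mu /init /= size_map.
have -> : sumn x = sumn [seq nth 0%N x m | m <- iota 0 (size x)].
  by rewrite -[in LHS](mkseq_nth 0%N x).
apply: sumn_le => m; rewrite mem_iota /= => hm.
rewrite (nth_map 0%N) // /w; case: ifP => hh //; lia.
Qed.

Lemma term x t : ~~ halted (state_at x t) -> (mu (ys (state_at x t)) + t <= sumn x)%N.
Proof.
elim: t => [|t IH]; first by rewrite addn0 => _; apply: mu_init.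
rewrite state_atS => h.
have h' : ~~ halted (state_at x t).
  by apply: contra h => hh; rewrite halted_step.
have := IH h'; have := mu_step h; lia.
Qed.

Definition Tend x := (size x + sumn x).+1.

Lemma halted_end x : halted (state_at x (Tend x)).
Proof.
apply/negPn/negP => h; have := term h; rewrite /Tend; lia.
Qed.

Lemma halted_later x t s : halted (state_at x t) -> state_at x (s + t) = state_at x t.
Proof.
move=> h; elim: s => [|s IH] //; by rewrite addSn state_atS IH halted_step.
Qed.


Definition cneg (y : seq int) m n := count (fun j => (j < m)%N && (y`_j < 0)) (iota 0 n).
Definition cdown (d : seq (nat * nat)) m n := count (fun j => (m, j) \in d) (iota 0 n).

Definition Inv (x : seq nat) (st : state) : Prop :=
  [/\ size (ys st) = size x,
      halted st -> forall m, (m < size x)%N -> (ys st)`_m < 0,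
      forall a b, (a < size x)%N -> (b < size x)%N -> a <> b ->
        (ys st)`_a < 0 -> (ys st)`_b < 0 -> (ys st)`_a <> (ys st)`_b,
      forall a b, (a, b) \in downs st -> [/\ (a < b)%N, (b < size x)%N, (ys st)`_b < 0 &
         forall i, (i < b)%N -> 0 < (ys st)`_i -> (i, b) \in downs st]
    & forall m, (m < size x)%N -> 0 <= (ys st)`_m ->
        (ys st)`_m = (nth 0%N x m)%:Z - 1 - (cneg (ys st) m (size x))%:Z
                      - (cdown (downs st) m (size x))%:Z ].

Lemma count_le_in (T : eqType) (p q : pred T) (s : seq T) :
  (forall a, a \in s -> p a -> q a) -> (count p s <= count q s)%N.
Proof.
elim: s => //= a s IH H.
apply: leq_add; last by apply: IH => b bs; apply: H; rewrite inE bs orbT.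
by case: (boolP (p a)) => //= pa; rewrite H // inE eqxx.
Qed.

Lemma sorted_count (s : seq nat) q : sorted leq s -> (q < size s)%N ->
  (nth 0 s q <= q.+1)%N -> (q.+1 <= count (fun a => a <= q.+1)%N s)%N.
Proof.
move=> so hq hn.
rewrite -(cat_take_drop q.+1 s) count_cat.
have : all (fun a => a <= q.+1)%N (take q.+1 s).
  apply/(all_nthP 0%N) => i; rewrite size_takel // => hi.
  rewrite nth_take //; apply: leq_trans hn.
  apply: (sorted_leq_nth leq_trans leqnn) => //; rewrite inE; lia.
rewrite all_count => /eqP ->; rewrite size_takel //; lia.
Qed.

Lemma key x st : parking_function x -> Inv x st -> is_down_step st ->
  exists b, [/\ (b < size x)%N, (ys st)`_b < 0 & b \in cands st].
Proof.
move=> pf [hs hh hd h1 h2] /and3P[hnh hz hp].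
set n := size x.
case: (boolP (has (fun b => ((ys st)`_b < 0) && down_cand st b) (iota 0 n))).
  move=> /hasP [b hb /andP[b1 b2]].
  have hbn : (b < size x)%N by move: hb; rewrite mem_iota /n; lia.
  by exists b; split => //; rewrite mem_cands b2 hs hbn.
move=> H; exfalso.
have hall : forall b i, (b < n)%N -> (ys st)`_b < 0 -> (i < b)%N -> 0 < (ys st)`_i ->
    (i, b) \in downs st.
  move=> b i hb yb ib yi; apply/negPn/negP => nd.
  move/hasP: H; apply; exists b; first by rewrite mem_iota.
  rewrite yb /=; apply/hasP; exists i; first by rewrite mem_iota /=; lia.
  by rewrite /is_cand ib yi nd hs /= andbT.
have nz : forall m, (m < n)%N -> (ys st)`_m != 0.
  move=> m hm; apply/negP => /eqP e; move/hasP: hz; apply.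
  by exists (ys st)`_m; rewrite ?e // -e mem_nth // hs.
set q := count (fun j => (ys st)`_j < 0) (iota 0 n).
have pos : forall m, (m < n)%N -> 0 < (ys st)`_m -> (nth 0%N x m)%:Z = (ys st)`_m + 1 + q%:Z.
  move=> m hm ym.
  have e2 : cdown (downs st) m n = count (fun j => (m < j)%N && ((ys st)`_j < 0)) (iota 0 n).
    apply: eq_in_count => j; rewrite mem_iota /= => hj.
    apply/idP/idP.
      by case/h1 => a _ c _; rewrite a c.
    by case/andP => a b; apply: hall.
  have e3 : (cneg (ys st) m n + cdown (downs st) m n = q)%N.
    rewrite e2 /cneg -count_predUI.
    rewrite [X in (_ + X)%N](_ : _ = 0%N); last first.
      transitivity (count pred0 (iota 0 n)); last exact: count_pred0.
      apply: eq_count => j /=.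
      apply/negP => /andP[/andP[a _] /andP[b _]]; lia.
    rewrite addn0; apply: eq_in_count => j _ /=.
    case: ltngtP => //= [_|->]; first by rewrite orbF.
    by apply/esym/negbTE; rewrite -leNgt ltW.
  have := h2 m hm (ltW ym); rewrite -e3 -/n; lia.
have qn : (q < n)%N.
  have : has (fun j => ~~ ((ys st)`_j < 0)) (iota 0 n).
    case/hasP: hp => v vin v0.
    have [m hm e] := (nthP 0 vin).
    apply/hasP; exists m; first by rewrite mem_iota; move: hm; rewrite hs /n; lia.
by rewrite /= -leNgt e ltW.
  rewrite has_count.
  have := count_predC (fun j => (ys st)`_j < 0) (iota 0 n).
  rewrite size_iota /q => e1 e2; apply: (leq_trans _ (eq_leq e1)); rewrite -addn1 leq_add2l; exact: e2.
have c1 : (count (fun m => nth 0%N x m <= q.+1)%N (iota 0 n) <= q)%N.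
  apply: count_le_in => m; rewrite mem_iota /= => hm hx.
  have := nz m hm; case: (ltrgtP ((ys st)`_m) 0) => // ym _.
  have := pos m hm ym; lia.
have c2 : (q.+1 <= count (fun m => nth 0%N x m <= q.+1)%N (iota 0 n))%N.
  have := count_map (nth 0%N x) (fun a => a <= q.+1)%N (iota 0 n).
  rewrite /comp => <-.
  have -> : [seq nth 0%N x i | i <- iota 0 n] = x by rewrite -[RHS](mkseq_nth 0%N x).
  rewrite -(count_sort leq).
  apply: sorted_count; first exact: sort_sorted leq_total x.
    by rewrite size_sort.
  case/andP: pf => _ /forallP /(_ (Ordinal qn)); done.
lia.
Qed.


Lemma count_false (T : Type) (p : pred T) (s : seq T) : (forall a, p a = false) -> count p s = 0%N.
Proof. by move=> h; elim: s => //= a s ->; rewrite h. Qed.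

Lemma count_or1 (s : seq nat) (P : pred nat) u : uniq s -> u \in s -> ~~ P u ->
  count (fun j => P j || (j == u)) s = (count P s).+1.
Proof.
move=> us hu Pu.
have := count_predUI P (pred1 u) s.
have -> : count (predI P (pred1 u)) s = 0%N.
  by apply: count_false => j /=; case: (eqVneq j u) => [->|_]; rewrite ?andbF // (negbTE Pu).
have -> : count (pred1 u) s = 1%N by rewrite count_uniq_mem ?hu.
rewrite addn0 addn1 => <-; done.
Qed.

Lemma Inv_init x : parking_function x -> Inv x (init x).
Proof.
case/andP => /allP hpos _.
have ny : forall m, (m < size x)%N -> (ys (init x))`_m = (nth 0%N x m)%:Z - 1.
  by move=> m hm; rewrite /init /= (nth_map 0%N).
have p1 : forall m, (m < size x)%N -> (0 < nth 0%N x m)%N.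
  by move=> m hm; apply: hpos; rewrite mem_nth.
split => //=.
- by rewrite size_map.
- by move=> a b ha _ _; rewrite ny //; have := p1 a ha; lia.
- move=> m hm _; rewrite /cneg /cdown /=.
  rewrite (count_false _ (fun j => in_nil _)) .
  rewrite [X in _ - X%:Z - _](_ : _ = 0%N) ?ny //; first lia.
  transitivity (count pred0 (iota 0 (size x))); last exact: count_pred0.
  apply: eq_in_count => j; rewrite mem_iota /= => hj; rewrite ny //; have := p1 j hj; lia.
Qed.

Section Up.
Variables (y : seq int) (u : nat).
Hypotheses (hu : (u < size y)%N) (yu : y`_u = 0).

Lemma up_le m : (m < size y)%N -> (up_update y u)`_m <= y`_m.
Proof.
move=> hm; rewrite up_nth //; case: eqP => [->|_]; first by rewrite yu.
by case: ifP => _ //; lia.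
Qed.

Lemma up_u : (up_update y u)`_u = -1.
Proof. by rewrite up_nth // eqxx. Qed.

Lemma up_neg m : (m < size y)%N -> m != u ->
  ((up_update y u)`_m < 0) = (y`_m < 0).
Proof.
move=> hm mu; rewrite up_nth // (negbTE mu).
case: ifP => [/orP[/andP[_ h]|h]|h]; try lia.
Qed.

Lemma up_negv m : (m < size y)%N -> y`_m < 0 -> (up_update y u)`_m = y`_m - 1.
Proof.
move=> hm h; rewrite up_nth // h orbT; case: eqP => // e.
by move: h; rewrite e yu.
Qed.
End Up.

Lemma Inv_up x st : Inv x st -> has (fun v => v == 0) (ys st) ->
  Inv x (State (up_update (ys st) (up_feeder (ys st))) (downs st) false).
Proof.
move=> [hs hh hd h1 h2] hz.
case: (up_feederP hz) => u1 u2 u3.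
set u := up_feeder _ in u1 u2 u3 *.
set y := ys st in hs hh hd h1 h2 hz u1 u2 u3 *.
set y' := up_update y u.
have hs' : size y' = size x by rewrite size_map_iota.
split => //=.
- move=> a b ha hb ab; rewrite -hs in ha hb.
  case: (eqVneq a u) => [ea|au]; case: (eqVneq b u) => [eb|bu].
  + by exfalso; apply: ab; rewrite ea eb.
  + rewrite ea up_u // up_neg // => _ nb; rewrite up_negv //; lia.
  + rewrite eb up_u // up_neg // => na _; rewrite up_negv //; lia.
  + rewrite !up_neg // => na nb; rewrite !up_negv //.
    by move=> e; apply: (hd a b) => //; rewrite -?hs //; lia.
- move=> a b /h1 [ab hb nb hi]; split => //.
    rewrite up_negv ?hs //; lia.
  move=> i ib pi; apply: hi => //.
  have hi2 : (i < size y)%N by rewrite hs; lia.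
  by have := up_le u1 u2 hi2; apply: lt_le_trans pi.
- move=> m hm; rewrite -hs in hm.
  case: (eqVneq m u) => [->|mu]; first by rewrite up_u.
  move=> pm.
  have ym : 0 <= y`_m by have := up_le u1 u2 hm; apply: le_trans pm.
  have hc : cneg y' m (size x) = if (u < m)%N then (cneg y m (size x)).+1 else cneg y m (size x).
    rewrite /cneg; case: ifP => um.
      rewrite -(@count_or1 _ _ u) ?iota_uniq ?mem_iota /= ?u2 ?ltxx ?andbF //; last by rewrite -hs.
      apply: eq_in_count => j; rewrite mem_iota /= => hj.
      case: (eqVneq j u) => [->|ju]; first by rewrite um up_u // orbT.
      by rewrite orbF up_neg // hs.
    apply: eq_in_count => j; rewrite mem_iota /= => hj.
    case: (boolP (j < m)%N) => //= jm.
    have ju : j != u by apply/eqP => e; move: um; rewrite -e jm.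
    by rewrite up_neg // hs.
  rewrite hc; move: (h2 m (ltac:(rewrite -hs; done)) ym).
  rewrite /y' up_nth // (negbTE mu).
  case: (ltnP u m) => um /=.
    have ym0 : 0 < y`_m by have := u3 m (ltac:(lia)); lia.
    rewrite ym0 /=; lia.
  by rewrite ltNge ym /=.
Qed.

Lemma mem_pairs (s : seq nat) (f a b : nat) :
  ((a, b) \in ([seq (k, f) | k <- s] : seq (nat * nat))) = (b == f) && (a \in s).
Proof.
apply/mapP/andP => [[k ks [-> ->]]|[/eqP -> ha]]; first by rewrite eqxx.
by exists a.
Qed.

Lemma Inv_down x st f : Inv x st -> is_down_step st ->
  (f < size x)%N -> (ys st)`_f < 0 ->
  (exists i, [/\ (i < f)%N, 0 < (ys st)`_i & (i, f) \notin downs st]) ->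
  Inv x (down_update st f).
Proof.
move=> [hs hh hd h1 h2] /and3P[_ hz _] hf yf [i0 [i0f yi0 ni0]].
have nof : forall a, (a, f) \notin downs st.
  move=> a; apply/negP => /h1 [_ _ _ H]; move: ni0; rewrite H //.
set y := ys st in hs hh hd h1 h2 hz yf yi0 *.
have nz : forall m, (m < size x)%N -> y`_m != 0.
  move=> m hm; apply/negP => /eqP e; move/hasP: hz; apply.
  by exists y`_m; rewrite ?e // -e mem_nth // hs.
have dn : forall m, (m < size x)%N -> (ys (down_update st f))`_m =
    if (m < f)%N && (0 < y`_m) then y`_m - 1 else y`_m.
  by move=> m hm; rewrite down_nth // hs.
have dneg : forall m, (m < size x)%N -> y`_m < 0 -> (ys (down_update st f))`_m = y`_m.
  by move=> m hm ym; rewrite dn // ltNge (ltW ym) andbF.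
have dle : forall m, (m < size x)%N -> (ys (down_update st f))`_m <= y`_m.
  by move=> m hm; rewrite dn //; case: ifP => // _; rewrite gerDl lerN10.
have dnegi : forall m, (m < size x)%N -> ((ys (down_update st f))`_m < 0) = (y`_m < 0).
  move=> m hm; rewrite dn //; case: ifP => // /andP[_ h].
  by apply/idP/idP => hh'; [lia|lia].
split => //=.
- by rewrite size_map_iota.
- move=> a b ha hb ab; rewrite !dnegi // => na nb; rewrite !dneg //; exact: hd.
- move=> a b; rewrite mem_cat => /orP[|].
    rewrite mem_pairs mem_filter mem_iota /= => /andP[/eqP -> /andP[ya af]].
    split => //; first by rewrite dneg.
    move=> i ifl pi; rewrite mem_cat mem_pairs mem_filter mem_iota /= eqxx ifl andbT.
    by apply/orP; left; apply: lt_le_trans pi (dle i (ltn_trans ifl hf)).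
  case/h1 => ab hb nb hi; split => //; first by rewrite dneg.
  move=> i ib pi; rewrite mem_cat hi ?orbT //.
  exact: lt_le_trans pi (dle i (ltn_trans ib hb)).
- move=> m hm pm.
  have ym : 0 < y`_m.
    have := dle m hm; have := nz m hm; move=> h1' h2'.
    have := le_trans pm h2'; rewrite le_eqVlt eq_sym (negbTE h1') //.
  have hc : cneg (ys (down_update st f)) m (size x) = cneg y m (size x).
    apply: eq_in_count => j; rewrite mem_iota /= => hj; rewrite dnegi //.
  rewrite hc (dn m hm) ym andbT.
  have := h2 m hm (ltW ym).
  case: (ltnP m f) => mf.
    have -> : cdown ([seq (k, f) | k <- iota 0 f & 0 < y`_k] ++ downs st) m (size x) =
              (cdown (downs st) m (size x)).+1.
      rewrite /cdown -(@count_or1 _ _ f) ?iota_uniq ?mem_iota ?nof //.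
      apply: eq_in_count => j _ /=.
      rewrite mem_cat mem_pairs mem_filter mem_iota /= add0n mf andbT.
      by case: (j == f); rewrite /= ?orbT ?orbF //; apply/orP; left; exact: ym.
    lia.
  have -> : cdown ([seq (k, f) | k <- iota 0 f & 0 < y`_k] ++ downs st) m (size x) =
            cdown (downs st) m (size x).
    apply: eq_in_count => j _ /=.
    rewrite mem_cat mem_pairs mem_filter mem_iota /= ltnNge mf !andbF //.
  by [].
Qed.


Lemma Inv_step x st : parking_function x -> Inv x st -> Inv x (step st).
Proof.
move=> pf inv.
case: (step_cases st) => [-> _ //|hnh hz ->|hd hc ->|hd hc ->|hnh hz hp ->].
- exact: Inv_up.
- have [b [hb yb bc]] := key pf inv hd.
  have [fin fmin] := feederP hc.
  move: (fin); rewrite mem_cands => /andP[fs /down_candP [i [i1 _ i3 i4]]].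
  have hs : size (ys st) = size x by case: inv.
  apply: Inv_down => //; first by rewrite -hs.
    exact: le_lt_trans (fmin b bc) yb.
  by exists i.
- by have [b [_ _]] := key pf inv hd; rewrite hc.
- case: inv => hs hh hd h1 h2; split => //= _ m hm.
  have z : (ys st)`_m != 0.
    apply/negP => /eqP e; move/hasP: hz; apply.
    by exists (ys st)`_m; rewrite ?e // -e mem_nth // hs.
  have p : ~~ (0 < (ys st)`_m).
    apply/negP => e; move/hasP: hp; apply.
    by exists (ys st)`_m; rewrite ?mem_nth // hs.
  by case: ltrgtP z p.
Qed.

Lemma Inv_at x t : parking_function x -> Inv x (state_at x t).
Proof.
move=> pf; elim: t => [|t IH]; first exact: Inv_init.
by rewrite state_atS; apply: Inv_step.
Qed.

Lemma Q_iter j k s st : (j < size (ys st))%N -> (k < size (ys st))%N -> j <> k ->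
  Q j k st -> Q j k (iter s step st).
Proof.
move=> hj hk jk; elim: s => [//|s IH] /IH h /=.
have e : size (ys (iter s step st)) = size (ys st).
  by elim: (s) => //= s' IH'; rewrite size_step.
by apply: Q_step; rewrite ?e.
Qed.

Lemma dir x t a b : parking_function x -> is_down_step (state_at x t) ->
  a \in cands (state_at x t) -> b \in cands (state_at x t) -> a <> b ->
  down_feeder (state_at x t) = a ->
  `|(source_priority x)`_b| < `|(source_priority x)`_a|.
Proof.
move=> pf hds ac bc ab fa.
set st := state_at x t.
have inv := Inv_at t pf.
have [c [hc yc cc]] := key pf inv hds.
have hcne : cands st != [::] by apply/eqP => e; move: cc; rewrite /st e.
have [fin fmin] := feederP hcne.
rewrite -/st fa in fmin.
have ya : (ys st)`_a < 0 := le_lt_trans (fmin c cc) yc.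
case: inv => hs _ hd _ _.
have ha : (a < size x)%N by move: ac; rewrite mem_cands hs => /andP[].
have hb : (b < size x)%N by move: bc; rewrite mem_cands hs => /andP[].
have q0 : Q a b st.
  split => //; case: (ltP ((ys st)`_b) 0) => yb; last by left.
  right; rewrite lt_neqAle fmin // andbT; apply/eqP; exact: hd.
have tle : (t <= Tend x)%N.
  rewrite leqNgt; apply/negP => lt.
  have := halted_later (t - Tend x) (halted_end x).
  rewrite subnK; last exact: ltnW.
  by move=> e; move: hds; rewrite /is_down_step e halted_end.
have qf : Q a b (state_at x (Tend x)).
  rewrite /state_at -(subnK tle) iterD.
  by apply: Q_iter; rewrite ?hs.
have [_ hall _ _ _] := Inv_at (Tend x) pf.
have na := hall (halted_end x) a ha.
have nb := hall (halted_end x) b hb.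
rewrite /source_priority -/(Tend x).
case: qf => _ [h|h]; first by move: h; rewrite leNgt nb.
rewrite !ltr0_norm //; rewrite ltrN2; exact: h.
Qed.

Theorem lemma2p6 (x : seq nat) (t i j k : nat) :
  parking_function x ->
  is_down_step (state_at x t) ->
  is_cand (state_at x t) i j -> is_cand (state_at x t) i k -> j <> k ->
  (down_feeder (state_at x t) = j \/ down_feeder (state_at x t) = k) ->
  (down_feeder (state_at x t) = j <->
     `|(source_priority x)`_k| < `|(source_priority x)`_j|).
Proof.
move=> pf hds cj ck jk hor.
have jc : j \in cands (state_at x t).
  by rewrite mem_cands (cand_down cj); case/and4P: cj => _ -> _ _.
have kc : k \in cands (state_at x t).
  by rewrite mem_cands (cand_down ck); case/and4P: ck => _ -> _ _.
split; first exact: dir.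
move=> h; case: hor => // fk.
have := dir pf hds kc jc (fun e => jk (esym e)) fk.
by rewrite ltNge (ltW h).
Qed.
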